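(* Let $R>\pi$, $\varepsilon\in(0,1)$, $C>0$, and let $\phi\in C^0([0,R])$ satisfy $\phi(0)=\phi(R)=0$ and $\phi>0$ in $(0,R)$. Then there exists $\bar b>1$ such that the solution $\psi$ of $$-\psi''=\psi(1-\bar b\phi-\psi)\ \text{ in }(0,R),\qquad \psi(0)=\psi(R)=1-\varepsilon,$$ satisfies $\psi<1-\varepsilon$ in $(0,R)$, $\psi'(0)<-C$ and $\psi'(R)>C$.
   Context: Here ''the solution'' refers to the classical solution with values in $[0,1]$ obtained by the monotone (sub/supersolution) method, using $0$ and $1$ as sub- and supersolution. *)

(* Defs.v *)
From Stdlib Require Import Reals.
From Coquelicot Require Import Coquelicot.
Open Scope R_scope.

Definition cont_on_closed (f : R -> R) (a b : R) : Prop :=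
  forall x, a <= x <= b ->
    filterlim f (within (fun y => a <= y <= b) (locally x)) (locally (f x)).

Definition is_solution (L b eps : R) (phi psi : R -> R) : Prop :=
  cont_on_closed psi 0 L /\
  (exists dpsi : R -> R, forall x, 0 < x < L ->
      is_derive psi x (dpsi x) /\
      is_derive dpsi x (- (psi x * (1 - b * phi x - psi x)))) /\
  psi 0 = 1 - eps /\ psi L = 1 - eps.

Definition is_solution01 (L b eps : R) (phi psi : R -> R) : Prop :=
  is_solution L b eps phi psi /\ (forall x, 0 <= x <= L -> 0 <= psi x <= 1).

Definition is_right_deriv (f : R -> R) (x l : R) : Prop :=
  filterlim (fun h => (f (x + h) - f x) / h) (at_right 0) (locally l).
Definition is_left_deriv (f : R -> R) (x l : R) : Prop :=
  filterlim (fun h => (f (x + h) - f x) / h) (at_left 0) (locally l).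

(* Main.v *)
Require Import Defs.
From Stdlib Require Import Reals Lra Lia Classical FunctionalExtensionality.
From Coquelicot Require Import Coquelicot.
Open Scope R_scope.

Ltac rabs := unfold Rabs in *; repeat match goal with
  | |- context [Rcase_abs ?x] => destruct (Rcase_abs x)
  | H : context [Rcase_abs ?x] |- _ => destruct (Rcase_abs x)
  end.
Ltac rlra := rabs; lra.

Definition cont_at (f : R -> R) (x : R) := forall e, 0 < e ->
  exists d, 0 < d /\ forall y, Rabs (y - x) < d -> Rabs (f y - f x) < e.

Definition ccont (f : R -> R) p q := forall x, p <= x <= q -> forall e, 0 < e ->
  exists d, 0 < d /\ forall y, p <= y <= q -> Rabs (y - x) < d -> Rabs (f y - f x) < e.

Lemma ball_R (x e y : R) : ball x e y <-> Rabs (y - x) < e.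
Proof. unfold ball; simpl; unfold AbsRing_ball; simpl. unfold abs, minus, plus, opp; simpl. tauto. Qed.

Lemma cont_at_continuous f x : cont_at f x -> continuous f x.
Proof.
  intros H. unfold continuous. apply filterlim_locally. intros eps.
  destruct (H eps (cond_pos eps)) as [d [Hd H']]. exists (mkposreal d Hd).
  intros y Hy. apply ball_R. apply H'. apply ball_R in Hy. exact Hy.
Qed.

Lemma continuous_cont_at f x : continuous f x -> cont_at f x.
Proof.
  intros H e He. unfold continuous in H. rewrite filterlim_locally in H.
  destruct (H (mkposreal e He)) as [d Hd]. exists d. split. apply cond_pos.
  intros y Hy. apply ball_R. apply Hd. apply ball_R. exact Hy.
Qed.

Lemma cont_at_pt f x : cont_at f x -> continuity_pt f x.
Proof. intros H. apply continuity_pt_filterlim. apply cont_at_continuous; auto. Qed.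

Lemma cont_on_closed_ccont f a b : 
  (forall x, a <= x <= b ->
    filterlim f (within (fun y => a <= y <= b) (locally x)) (locally (f x))) -> ccont f a b.
Proof.
  intros H x Hx e He. specialize (H x Hx). rewrite filterlim_locally in H.
  destruct (H (mkposreal e He)) as [d Hd]. exists d. split. apply cond_pos.
  intros y Hy1 Hy. apply ball_R. apply Hd. apply ball_R. exact Hy. exact Hy1.
Qed.

Lemma ccont_cont_on_closed f a b : ccont f a b -> forall x, a <= x <= b ->
    filterlim f (within (fun y => a <= y <= b) (locally x)) (locally (f x)).
Proof.
  intros H x Hx. apply filterlim_locally. intros eps.
  destruct (H x Hx eps (cond_pos eps)) as [d [Hd H']]. exists (mkposreal d Hd).
  intros y Hy Hy1. apply ball_R. apply H'; auto; apply ball_R in Hy; exact Hy.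
Qed.

Definition clamp p q x := Rmax p (Rmin q x).

Lemma clamp_in p q x : p <= q -> p <= clamp p q x <= q.
Proof. intros. unfold clamp, Rmax, Rmin. repeat destruct Rle_dec; lra. Qed.
Lemma clamp_id p q x : p <= x <= q -> clamp p q x = x.
Proof. intros. unfold clamp, Rmax, Rmin. repeat destruct Rle_dec; lra. Qed.
Lemma clamp_lip p q x y : p <= q -> Rabs (clamp p q x - clamp p q y) <= Rabs (x - y).
Proof. intros. unfold clamp, Rmax, Rmin. repeat destruct Rle_dec; rlra. Qed.

Lemma ccont_clamp f p q : p <= q -> ccont f p q -> forall x, cont_at (fun y => f (clamp p q y)) x.
Proof.
  intros Hpq H x e He.
  destruct (H (clamp p q x) (clamp_in p q x Hpq) e He) as [d [Hd H']].
  exists d; split; auto. intros y Hy. apply H'. apply clamp_in; auto.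
  eapply Rle_lt_trans. apply clamp_lip; auto. auto.
Qed.

Lemma ccont_sub f p q p' q' : p <= p' -> q' <= q -> ccont f p q -> ccont f p' q'.
Proof.
  intros H1 H2 H x Hx e He. destruct (H x ltac:(lra) e He) as [d [Hd H']].
  exists d; split; auto. intros y Hy Hy2. apply H'; auto. lra.
Qed.

Lemma cont_ccont f p q : (forall x, cont_at f x) -> ccont f p q.
Proof.
  intros H x Hx e He. destruct (H x e He) as [d [Hd H']]. exists d; split; auto.
Qed.

Lemma deriv_max f x l r : is_derive f x l -> 0 < r ->
  (forall y, Rabs (y - x) < r -> f y <= f x) -> l = 0.
Proof.
  intros Hd Hr Hm. apply is_derive_Reals in Hd.
  destruct (Rtotal_order l 0) as [Hl|[Hl|Hl]]; auto; exfalso.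
  - destruct (Hd (- l) ltac:(lra)) as [del Hdel].
    set (h := - Rmin del r / 2).
    assert (Hmin : 0 < Rmin del r) by (apply Rmin_pos; [apply cond_pos|lra]).
    assert (Hh : h <> 0) by (unfold h; lra).
    assert (Hh2 : Rabs h < del).
    { unfold h. pose proof (Rmin_l del r). rlra. }
    specialize (Hdel h Hh Hh2).
    assert (Hq : (f (x + h) - f x) / h < 0) by rlra.
    assert (f (x + h) <= f x).
    { apply Hm. replace (x + h - x) with h by ring. pose proof (Rmin_r del r). unfold h. rlra. }
    assert (Hhn : h < 0) by (unfold h; lra).
    assert (0 <= (f (x + h) - f x) / h).
    { unfold Rdiv. replace ((f (x + h) - f x) * / h) with ((f x - f (x+h)) * / (- h)).
      apply Rmult_le_pos. lra. left. apply Rinv_0_lt_compat. lra.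
      field. lra. }
    lra.
  - destruct (Hd l ltac:(lra)) as [del Hdel].
    set (h := Rmin del r / 2).
    assert (Hmin : 0 < Rmin del r) by (apply Rmin_pos; [apply cond_pos|lra]).
    assert (Hh : h <> 0) by (unfold h; lra).
    assert (Hh2 : Rabs h < del).
    { unfold h. pose proof (Rmin_l del r). rlra. }
    specialize (Hdel h Hh Hh2).
    assert (Hq : 0 < (f (x + h) - f x) / h) by rlra.
    assert (f (x + h) <= f x).
    { apply Hm. replace (x + h - x) with h by ring. pose proof (Rmin_r del r). unfold h. rlra. }
    assert (Hhn : 0 < h) by (unfold h; lra).
    assert ((f (x + h) - f x) / h <= 0).
    { unfold Rdiv. replace ((f (x + h) - f x) * / h) with (- ((f x - f (x+h)) * / h)) by (field; lra).
      assert (0 <= (f x - f (x+h)) * / h). apply Rmult_le_pos. lra. left. apply Rinv_0_lt_compat. lra.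
      lra. }
    lra.
Qed.

Lemma mono_deriv g dg a b : a < b -> (forall c, a <= c <= b -> is_derive g c (dg c)) ->
  (forall c, a < c < b -> 0 <= dg c) -> g a <= g b.
Proof.
  intros Hab Hd Hp.
  destruct (MVT_cor2 g dg a b Hab) as [c [Hc1 Hc2]].
  { intros c Hc. apply is_derive_Reals. auto. }
  assert (0 <= dg c * (b - a)) by (apply Rmult_le_pos; [apply Hp; auto| lra]). lra.
Qed.

Lemma GL (f df d2 : R -> R) p q lev :
  p < q -> ccont f p q ->
  (forall x, p < x < q -> is_derive f x (df x)) ->
  (forall x, p < x < q -> is_derive df x (d2 x)) ->
  f p <= lev -> f q <= lev ->
  (forall x, p < x < q -> lev < f x -> 0 <= d2 x) ->
  forall x, p <= x <= q -> f x <= lev.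
Proof.
  intros Hpq Hc Hd1 Hd2 Hp Hq Hconv x Hx.
  destruct (Rle_lt_dec (f x) lev) as [|Hgt]; auto. exfalso.
  destruct (continuity_ab_maj (fun y => f (clamp p q y)) p q ltac:(lra)) as [x0 [Hmax Hx0]].
  { intros c Hc'. apply cont_at_pt. apply ccont_clamp; auto; lra. }
  rewrite (clamp_id p q x0 Hx0) in Hmax.
  set (M := f x0) in *.
  assert (HM : forall c, p <= c <= q -> f c <= M).
  { intros c Hc'. specialize (Hmax c Hc'). rewrite clamp_id in Hmax; auto. }
  assert (HMgt : lev < M) by (specialize (HM x Hx); lra).
  set (S := fun y => p <= y <= q /\ f y = M).
  destruct (completeness S) as [x1 [Hub Hlub]].
  { exists q. intros y [Hy _]. lra. }
  { exists x0. split; auto. }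
  assert (Hx01 : x0 <= x1) by (apply Hub; split; auto).
  assert (Hx1q : x1 <= q) by (apply Hlub; intros y [Hy _]; lra).
  assert (Hfx1 : f x1 = M).
  { destruct (Req_dec (f x1) M) as [|Hne]; auto. exfalso.
    assert (Hlt : f x1 < M) by (pose proof (HM x1 ltac:(lra)); lra).
    destruct (Hc x1 ltac:(lra) (M - f x1) ltac:(lra)) as [d [Hd Hd']].
    destruct (classic (exists y, S y /\ x1 - d < y)) as [[y [[Hy1 Hy2] Hy3]]|Hn].
    - assert (y <= x1) by (apply Hub; split; auto).
      specialize (Hd' y Hy1 ltac:(rlra)). rlra.
    - assert (x1 <= x1 - d); [|lra]. apply Hlub. intros y Hy.
      apply Rnot_lt_le. intros Hlt2. apply Hn. exists y; auto. }
  assert (Hx1 : p < x1 < q).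
  { split.
    - destruct (Rle_lt_dec x1 p) as [E|E]; [|lra]. assert (E2 : x1 = p) by lra. rewrite E2 in Hfx1; lra.
    - destruct (Rle_lt_dec q x1) as [E|E]; [|lra]. assert (E2 : x1 = q) by lra. rewrite E2 in Hfx1; lra. }
  assert (Hdf0 : df x1 = 0).
  { apply (deriv_max f x1 (df x1) (Rmin (x1 - p) (q - x1))). apply Hd1; auto.
    apply Rmin_pos; lra. intros y Hy. rewrite Hfx1. apply HM.
    pose proof (Rmin_l (x1 - p) (q - x1)). pose proof (Rmin_r (x1 - p) (q - x1)). rlra. }
  destruct (Hc x1 ltac:(lra) (M - lev) ltac:(lra)) as [d1 [Hd1p Hd1']].
  set (r1 := Rmin d1 (Rmin (x1 - p) (q - x1)) / 2).
  assert (Hr1 : 0 < r1).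
  { unfold r1. assert (0 < Rmin d1 (Rmin (x1 - p) (q - x1))) by (repeat apply Rmin_pos; lra). lra. }
  assert (Hr1a : r1 < d1 /\ r1 < x1 - p /\ r1 < q - x1).
  { unfold r1. pose proof (Rmin_l d1 (Rmin (x1 - p) (q - x1))).
    pose proof (Rmin_r d1 (Rmin (x1 - p) (q - x1))).
    pose proof (Rmin_l (x1 - p) (q - x1)). pose proof (Rmin_r (x1 - p) (q - x1)). lra. }
  assert (Hgt2 : forall z, x1 <= z <= x1 + r1 -> lev < f z).
  { intros z Hz. specialize (Hd1' z ltac:(lra) ltac:(rlra)). rewrite Hfx1 in Hd1'. rlra. }
  assert (Hdfz : forall z, x1 < z < x1 + r1 -> 0 <= df z).
  { intros z Hz. rewrite <- Hdf0. apply (mono_deriv df d2). lra.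
    intros c Hc'. apply Hd2. lra.
    intros c Hc'. apply Hconv. lra. apply Hgt2. lra. }
  assert (f x1 <= f (x1 + r1)).
  { apply (mono_deriv f df). lra. intros c Hc'. apply Hd1. lra. auto. }
  assert (S (x1 + r1)).
  { split. lra. pose proof (HM (x1 + r1) ltac:(lra)). lra. }
  specialize (Hub _ H0). lra.
Qed.

Lemma cont_poly a b c x : cont_at (fun t => a * t ^ 2 + b * t + c) x.
Proof.
  apply continuous_cont_at. apply (ex_derive_continuous (K := R_AbsRing) (V := R_NormedModule)). auto_derive. auto.
Qed.

Lemma ccont_lin f p q k a b c : ccont f p q -> ccont (fun t => k * f t + (a * t ^ 2 + b * t + c)) p q.
Proof.
  intros H x Hx e He.
  destruct (Req_dec k 0) as [Hk|Hk].
  - destruct (cont_poly a b c x e He) as [d [Hd H']]. exists d; split; auto.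
    intros y Hy1 Hy2. subst k. specialize (H' y Hy2). 
    replace (0 * f y + (a * y ^ 2 + b * y + c) - (0 * f x + (a * x ^ 2 + b * x + c))) with
      (a * y ^ 2 + b * y + c - (a * x ^ 2 + b * x + c)) by ring. auto.
  - assert (Hk' : 0 < Rabs k) by (apply Rabs_pos_lt; auto).
    destruct (H x Hx (e / 2 / Rabs k)) as [d1 [Hd1 H1]].
    { apply Rdiv_lt_0_compat; lra. }
    destruct (cont_poly a b c x (e/2) ltac:(lra)) as [d2 [Hd2 H2]].
    exists (Rmin d1 d2). split. apply Rmin_pos; auto.
    intros y Hy1 Hy2.
    specialize (H1 y Hy1 ltac:(pose proof (Rmin_l d1 d2); lra)).
    specialize (H2 y ltac:(pose proof (Rmin_r d1 d2); lra)).
    replace (k * f y + (a * y ^ 2 + b * y + c) - (k * f x + (a * x ^ 2 + b * x + c))) with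
      (k * (f y - f x) + (a * y ^ 2 + b * y + c - (a * x ^ 2 + b * x + c))) by ring.
    eapply Rle_lt_trans. apply Rabs_triang. rewrite Rabs_mult.
    assert (Rabs k * Rabs (f y - f x) < e / 2).
    { replace (e/2) with (Rabs k * (e / 2 / Rabs k)) by (field; lra).
      apply Rmult_lt_compat_l; auto. }
    lra.
Qed.

Lemma der_lin f df x k a b c : is_derive f x df ->
  is_derive (fun t => k * f t + (a * t ^ 2 + b * t + c)) x (k * df + (2 * a * x + b)).
Proof.
  intros H. apply (is_derive_plus (fun t => k * f t) (fun t => a * t ^ 2 + b * t + c)).
  apply is_derive_scal; auto. auto_derive; auto. ring.
Qed.

Lemma der_lin1 df x k a b : is_derive (fun t => k * df t + (2 * a * t + b)) x
  ((fun t => k * df t + (2 * a * t + b)) x) -> True.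
Proof. auto. Qed.

Lemma GLlin (f df d2 : R -> R) h k a b c :
  0 < h -> ccont f 0 h ->
  (forall x, 0 < x < h -> is_derive f x (df x) /\ is_derive df x (d2 x)) ->
  (forall x, 0 < x < h -> 0 <= k * d2 x + 2 * a) ->
  k * f 0 + (a * 0 ^ 2 + b * 0 + c) <= 0 -> k * f h + (a * h ^ 2 + b * h + c) <= 0 ->
  forall x, 0 <= x <= h -> k * f x + (a * x ^ 2 + b * x + c) <= 0.
Proof.
  intros Hh Hc Hd Hconv H0 H1 x Hx.
  apply (GL (fun t => k * f t + (a * t ^ 2 + b * t + c)) (fun t => k * df t + (2 * a * t + b))
           (fun t => k * d2 t + 2 * a) 0 h 0); auto.
  - apply ccont_lin; auto.
  - intros y Hy. apply der_lin. apply Hd; auto.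
  - intros y Hy. replace (k * d2 y + 2 * a) with (k * d2 y + (2 * 0 * y + 2 * a)) by ring.
    replace (fun t => k * df t + (2 * a * t + b)) with (fun t => k * df t + (0 * t ^ 2 + (2 * a) * t + b)).
    apply der_lin. apply Hd; auto. apply functional_extensionality. intros; ring.
Qed.

Lemma right_deriv_eps f x l :
  (forall e, 0 < e -> exists d, 0 < d /\ forall h, 0 < h < d -> Rabs ((f (x + h) - f x) / h - l) < e) ->
  filterlim (fun h => (f (x + h) - f x) / h) (at_right 0) (locally l).
Proof.
  intros H. apply filterlim_locally. intros eps.
  destruct (H eps (cond_pos eps)) as [d [Hd H']]. exists (mkposreal d Hd).
  intros y Hy Hy2. apply ball_R. apply H'. pose proof (proj1 (ball_R 0 d y) Hy) as Hy3; rlra.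
Qed.

Lemma left_deriv_eps f x l :
  (forall e, 0 < e -> exists d, 0 < d /\ forall h, - d < h < 0 -> Rabs ((f (x + h) - f x) / h - l) < e) ->
  filterlim (fun h => (f (x + h) - f x) / h) (at_left 0) (locally l).
Proof.
  intros H. apply filterlim_locally. intros eps.
  destruct (H eps (cond_pos eps)) as [d [Hd H']]. exists (mkposreal d Hd).
  intros y Hy Hy2. apply ball_R. apply H'. pose proof (proj1 (ball_R 0 d y) Hy) as Hy3; rlra.
Qed.

Lemma LE (f df d2 : R -> R) dl A B' :
  0 < dl -> 0 <= B' -> ccont f 0 dl ->
  (forall x, 0 < x < dl -> is_derive f x (df x) /\ is_derive df x (d2 x)) ->
  (forall x, 0 < x < dl -> -1/4 <= d2 x <= B') ->
  f 0 = A -> f dl + dl^2/8 < A ->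
  (forall x, 0 < x <= dl -> f x < A) /\
  exists l, (forall e, 0 < e -> exists d, 0 < d /\
       forall h, 0 < h < d -> Rabs ((f (0 + h) - f 0)/h - l) < e)
     /\ l <= (f dl - A)/dl + dl/8.
Proof.
  intros Hdl HB Hc Hd Hb Hf0 Hfdl.
  assert (convex : forall h2, 0 < h2 <= dl -> forall x, 0 <= x <= h2 ->
     f x + x^2/8 - A <= x / h2 * (f h2 + h2^2/8 - A)).
  { intros h2 Hh2 x Hx.
    pose proof (GLlin f df d2 h2 1 (1/8) (- ((f h2 + h2^2/8 - A) / h2)) (-A) ltac:(lra)
      (ccont_sub f 0 dl 0 h2 ltac:(lra) ltac:(lra) Hc)
      ltac:(intros y Hy; apply Hd; lra)
      ltac:(intros y Hy; specialize (Hb y ltac:(lra)); lra)) as G.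
    assert (G2 : 1 * f x + (1/8 * x ^ 2 + - ((f h2 + h2 ^ 2 / 8 - A) / h2) * x + - A) <= 0).
    { apply G; auto.
      - rewrite Hf0. simpl. lra.
      - replace (1 * f h2 + (1 / 8 * h2 ^ 2 + - ((f h2 + h2 ^ 2 / 8 - A) / h2) * h2 + - A)) with 0
          by (field; lra). lra. }
    replace (x / h2 * (f h2 + h2 ^ 2 / 8 - A)) with (((f h2 + h2 ^ 2 / 8 - A) / h2) * x) by (field; lra).
    lra. }
  assert (concave : forall h2, 0 < h2 <= dl -> forall x, 0 <= x <= h2 ->
     x / h2 * (f h2 - B' * h2^2/2 - A) <= f x - B' * x^2/2 - A).
  { intros h2 Hh2 x Hx.
    pose proof (GLlin f df d2 h2 (-1) (B'/2) ((f h2 - B' * h2^2/2 - A) / h2) A ltac:(lra)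
      (ccont_sub f 0 dl 0 h2 ltac:(lra) ltac:(lra) Hc)
      ltac:(intros y Hy; apply Hd; lra)
      ltac:(intros y Hy; specialize (Hb y ltac:(lra)); lra)) as G.
    assert (G2 : -1 * f x + (B'/2 * x ^ 2 + ((f h2 - B' * h2^2/2 - A) / h2) * x + A) <= 0).
    { apply G; auto.
      - rewrite Hf0. simpl. lra.
      - replace (-1 * f h2 + (B'/2 * h2 ^ 2 + ((f h2 - B' * h2^2/2 - A) / h2) * h2 + A)) with 0
          by (field; lra). lra. }
    replace (x / h2 * (f h2 - B' * h2 ^ 2 / 2 - A)) with (((f h2 - B' * h2^2/2 - A) / h2) * x) by (field; lra).
    lra. }
  split.
  { intros x Hx. specialize (convex dl ltac:(lra) x ltac:(lra)).
    assert (0 < x / dl) by (apply Rdiv_lt_0_compat; lra).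
    assert (x / dl * (f dl + dl ^ 2 / 8 - A) < 0).
    { replace (x / dl * (f dl + dl ^ 2 / 8 - A)) with (- (x / dl * (A - f dl - dl ^ 2 / 8))) by ring.
      assert (0 < x / dl * (A - f dl - dl ^ 2 / 8)) by (apply Rmult_lt_0_compat; lra). lra. }
    assert (0 < x ^ 2) by (apply pow_lt; lra). lra. }
  set (Q := fun h => (f h - A) / h + h / 8).
  assert (Qmono : forall h1 h2, 0 < h1 <= h2 -> h2 <= dl -> Q h1 <= Q h2).
  { intros h1 h2 H12 H2.
    specialize (convex h2 ltac:(lra) h1 ltac:(lra)).
    assert (E1 : Q h1 = (f h1 + h1^2/8 - A) / h1) by (unfold Q; field; lra).
    assert (E2 : h1 / h2 * (f h2 + h2 ^ 2 / 8 - A) = h1 * Q h2) by (unfold Q; field; lra).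
    rewrite E2 in convex. rewrite E1.
    replace (Q h2) with ((h1 * Q h2) / h1) by (field; lra).
    apply Rmult_le_compat_r. left; apply Rinv_0_lt_compat; lra. auto. }
  set (K0 := (f dl - A) / dl - B' * dl / 2).
  assert (Qlow : forall h, 0 < h <= dl -> K0 <= Q h).
  { intros h Hh. specialize (concave dl ltac:(lra) h ltac:(lra)).
    assert (E1 : h / dl * (f dl - B' * dl ^ 2 / 2 - A) = h * ((f dl - A)/dl - B' * dl / 2))
      by (field; lra).
    rewrite E1 in concave.
    assert (K0 <= (f h - A) / h - B' * h / 2 + B' * dl / 2 - B' * dl / 2 + B' * h / 2); [| unfold Q; lra].
    assert (K0 <= (f h - B' * h ^ 2 / 2 - A) / h).
    { unfold K0. replace ((f dl - A) / dl - B' * dl / 2) with 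
       ((h * ((f dl - A) / dl - B' * dl / 2)) / h) by (field; lra).
      apply Rmult_le_compat_r. left; apply Rinv_0_lt_compat; lra. auto. }
    replace ((f h - B' * h ^ 2 / 2 - A) / h) with ((f h - A) / h - B' * h / 2) in H by (field; lra).
    assert (0 <= B' * h) by (apply Rmult_le_pos; lra). lra. }
  set (E := fun y => exists h, 0 < h <= dl /\ y = - Q h).
  destruct (completeness E) as [m [Hub Hlub]].
  { exists (- K0). intros y [h [Hh ->]]. specialize (Qlow h Hh). lra. }
  { exists (- Q dl). exists dl. split; auto. lra. }
  assert (Hl : forall h, 0 < h <= dl -> - m <= Q h).
  { intros h Hh. assert (- Q h <= m) by (apply Hub; exists h; auto). lra. }
  exists (- m). split.
  - intros e He.
    assert (exists h0, 0 < h0 <= dl /\ Q h0 < - m + e / 2) as [h0 [Hh0 Hq0]].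
    { destruct (classic (exists h0, 0 < h0 <= dl /\ Q h0 < - m + e / 2)) as [|Hn]; auto.
      exfalso. assert (m <= m - e/2); [|lra]. apply Hlub. intros y [h [Hh ->]].
      apply Rnot_lt_le. intros Hlt. apply Hn. exists h. split; auto. lra. }
    exists (Rmin h0 (4 * e)). split. apply Rmin_pos; lra.
    intros h Hh. pose proof (Rmin_l h0 (4 * e)). pose proof (Rmin_r h0 (4 * e)).
    assert (Q h <= Q h0) by (apply Qmono; lra).
    specialize (Hl h ltac:(lra)).
    replace ((f (0 + h) - f 0) / h - - m) with (Q h - h / 8 + m)
      by (unfold Q; rewrite Hf0; replace (0 + h) with h by ring; field; lra).
    rlra.
  - specialize (Hl dl ltac:(lra)). unfold Q in Hl. 
    assert (Hub2 : - Q dl <= m) by (apply Hub; exists dl; split; [lra|auto]). unfold Q in Hub2. lra.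
Qed.

Lemma ccont_minus_cont f g p q : ccont f p q -> (forall x, cont_at g x) ->
  ccont (fun t => f t - g t) p q.
Proof.
  intros H Hg x Hx e He.
  destruct (H x Hx (e/2) ltac:(lra)) as [d1 [Hd1 H1]].
  destruct (Hg x (e/2) ltac:(lra)) as [d2 [Hd2 H2]].
  exists (Rmin d1 d2). split. apply Rmin_pos; auto.
  intros y Hy1 Hy2.
  specialize (H1 y Hy1 ltac:(pose proof (Rmin_l d1 d2); lra)).
  specialize (H2 y ltac:(pose proof (Rmin_r d1 d2); lra)).
  rlra.
Qed.

Definition wb k a c x := exp (- k * (x - a)) + exp (k * (x - c)).
Definition dwb k a c x := - k * exp (- k * (x - a)) + k * exp (k * (x - c)).

Lemma wb_der k a c x : is_derive (wb k a c) x (dwb k a c x).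
Proof. unfold wb, dwb. auto_derive; auto. unfold Rminus; ring. Qed.
Lemma dwb_der k a c x : is_derive (dwb k a c) x (k ^ 2 * wb k a c x).
Proof. unfold wb, dwb. auto_derive; auto. unfold Rminus; ring. Qed.
Lemma wb_cont k a c x : cont_at (wb k a c) x.
Proof.
  apply continuous_cont_at. apply (ex_derive_continuous (K := R_AbsRing) (V := R_NormedModule)).
  eexists. apply wb_der.
Qed.

Lemma barrier (psi dpsi phi : R -> R) L b m k dl :
  0 < dl -> 2 * dl <= L -> ccont psi 0 L ->
  (forall x, 0 < x < L -> is_derive psi x (dpsi x) /\
      is_derive dpsi x (- (psi x * (1 - b * phi x - psi x)))) ->
  (forall x, 0 <= x <= L -> 0 <= psi x <= 1) ->
  (forall x, dl/2 <= x <= L - dl/2 -> m <= phi x) -> 0 <= b -> 0 <= k -> k ^ 2 <= b * m - 1 ->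
  forall x, dl/2 <= x <= L - dl/2 -> psi x <= wb k (dl/2) (L - dl/2) x.
Proof.
  intros Hdl HL Hc Hd H01 Hm Hb Hk Hkm x Hx.
  assert (psi x - wb k (dl/2) (L - dl/2) x <= 0); [|lra].
  set (a := dl/2) in *. set (c := L - dl/2) in *.
  assert (G := GL (fun t => psi t - wb k a c t) (fun t => dpsi t - dwb k a c t)
     (fun t => - (psi t * (1 - b * phi t - psi t)) - k ^ 2 * wb k a c t) a c 0).
  assert (Ha : a < c) by (unfold a, c; lra).
  assert (Hxr : a <= x <= c) by (unfold a, c in *; lra).
  apply G; auto.
  - apply ccont_minus_cont. apply (ccont_sub psi 0 L); unfold a, c; auto; lra. apply wb_cont.
  - intros y Hy. apply (is_derive_minus psi (wb k a c)). apply Hd. unfold a, c in *; lra. apply wb_der.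
  - intros y Hy. apply (is_derive_minus dpsi (dwb k a c)). apply Hd. unfold a, c in *; lra. apply dwb_der.
  - unfold wb. replace (- k * (a - a)) with 0 by ring. rewrite exp_0.
    pose proof (exp_pos (k * (a - c))). pose proof (H01 a ltac:(unfold a, c in *; lra)). lra.
  - unfold wb. replace (k * (c - c)) with 0 by ring. rewrite exp_0.
    pose proof (exp_pos (- k * (c - a))). pose proof (H01 c ltac:(unfold a, c in *; lra)). lra.
  - intros y Hy Hpos.
    pose proof (H01 y ltac:(unfold a, c in *; lra)).
    pose proof (Hm y ltac:(unfold a, c in *; lra)).
    assert (psi y * (b * m - 1) <= psi y * (b * phi y + psi y - 1)).
    { apply Rmult_le_compat_l. lra. assert (b * m <= b * phi y) by (apply Rmult_le_compat_l; lra). lra. }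
    assert (k ^ 2 * wb k a c y <= k ^ 2 * psi y).
    { apply Rmult_le_compat_l. apply pow_le; lra. lra. }
    assert (k ^ 2 * psi y <= psi y * (b * m - 1)) by nra.
    lra.
Qed.

Lemma wb_small k dl L eta x : 0 < dl -> 2 * dl <= L -> 0 < eta -> k = 8 / (eta * dl) ->
  (x = dl \/ x = L - dl) -> wb k (dl/2) (L - dl/2) x <= eta / 2.
Proof.
  intros Hdl HL He Hk Hx.
  assert (Hk0 : 0 < k) by (rewrite Hk; apply Rdiv_lt_0_compat; [lra| apply Rmult_lt_0_compat; lra]).
  assert (Hkd : k * (dl / 2) = 4 / eta) by (rewrite Hk; field; lra).
  assert (Hb : exp (- (k * (dl / 2))) <= eta / 4).
  { rewrite exp_Ropp. pose proof (exp_ineq1 (k * (dl/2)) ltac:(nra)).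
    rewrite Hkd in *. 
    assert (1 + 4 / eta = (eta + 4) / eta) by (field; lra).
    assert (/ exp (4 / eta) <= / (1 + 4 / eta)).
    { apply Rinv_le_contravar. rewrite H0. apply Rdiv_lt_0_compat; lra. lra. }
    assert (/ (1 + 4 / eta) = eta / (eta + 4)) by (field; lra).
    assert (eta / (eta + 4) <= eta / 4).
    { apply Rmult_le_compat_l. lra. apply Rinv_le_contravar; lra. }
    lra. }
  assert (Hmono : forall y, y <= - (k * (dl / 2)) -> exp y <= eta / 4).
  { intros y Hy. destruct (Req_dec y (- (k * (dl / 2)))) as [->|Hne]; auto.
    pose proof (exp_increasing y (- (k * (dl / 2))) ltac:(lra)). lra. }
  unfold wb. destruct Hx as [-> | ->].
  - assert (exp (- k * (dl - dl / 2)) <= eta / 4) by (apply Hmono; nra).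
    assert (exp (k * (dl - (L - dl / 2))) <= eta / 4) by (apply Hmono; nra). lra.
  - assert (exp (- k * (L - dl - dl / 2)) <= eta / 4) by (apply Hmono; nra).
    assert (exp (k * (L - dl - (L - dl / 2))) <= eta / 4) by (apply Hmono; nra). lra.
Qed.

Lemma ccont_refl f p q L p' q' : ccont f p q -> p' = L - q -> q' = L - p ->
  ccont (fun x => f (L - x)) p' q'.
Proof.
  intros H -> -> x Hx e He. destruct (H (L - x) ltac:(lra) e He) as [d [Hd H']].
  exists d; split; auto. intros y Hy1 Hy2. apply H'. lra. rlra.
Qed.

Lemma der_refl f df L x : is_derive f (L - x) df -> is_derive (fun t => f (L - t)) x (- df).
Proof.
  intros H.
  assert (Hg : is_derive (fun t : R => L - t) x (-1)) by (auto_derive; auto; ring).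
  pose proof (is_derive_comp f (fun t => L - t) x df (-1) H Hg) as H2.
  replace (- df) with (scal (-1) df). exact H2. unfold scal; simpl; unfold mult; simpl. ring.
Qed.

Lemma all_sol L eps C phi b m Mphi dl k psi :
  0 < L -> 0 < eps < 1 -> 0 < C ->
  (forall x, 0 <= x <= L -> 0 <= phi x <= Mphi) ->
  0 < dl -> 4 * dl <= L -> dl <= (1 - eps) / (4 * C + 4) ->
  k = 8 / ((1 - eps) / 2 * dl) ->
  (forall x, dl/2 <= x <= L - dl/2 -> m <= phi x) -> 0 <= b -> k ^ 2 <= b * m - 1 ->
  is_solution01 L b eps phi psi ->
  (forall x, 0 < x < L -> psi x < 1 - eps) /\
  (exists d0, is_right_deriv psi 0 d0 /\ d0 < - C) /\
  (exists dL, is_left_deriv psi L dL /\ C < dL).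
Proof.
  intros HL0 Heps HC Hphi Hdl HdlL HdlC Hk Hm Hb Hkm [[Hc [[dpsi Hd] [H0 HL]]] H01].
  set (A := 1 - eps) in *.
  assert (HA : 0 < A < 1) by (unfold A; lra).
  apply cont_on_closed_ccont in Hc.
  assert (Hk0 : 0 <= k).
  { rewrite Hk. left. apply Rdiv_lt_0_compat. lra. apply Rmult_lt_0_compat; lra. }
  assert (Hdl1 : dl <= A / 4).
  { eapply Rle_trans. apply HdlC. apply Rmult_le_compat_l. lra. apply Rinv_le_contravar; lra. }
  assert (Hbar : forall x, (x = dl \/ x = L - dl) -> psi x <= A / 4).
  { intros x Hx.
    assert (H1 := barrier psi dpsi phi L b m k dl Hdl ltac:(lra) Hc Hd H01 Hm Hb Hk0 Hkm x
      ltac:(destruct Hx; subst; lra)).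
    assert (H2 := wb_small k dl L (A/2) x Hdl ltac:(lra) ltac:(unfold A; lra) Hk Hx). lra. }
  set (d2 := fun x => - (psi x * (1 - b * phi x - psi x))).
  assert (Hd' : forall x, 0 < x < L -> is_derive psi x (dpsi x) /\ is_derive dpsi x (d2 x)).
  { intros x Hx. apply Hd; auto. }
  set (B' := b * Mphi + 1).
  assert (HB' : 0 <= B').
  { unfold B'. pose proof (Hphi 0 ltac:(lra)). assert (0 <= b * Mphi) by (apply Rmult_le_pos; lra). lra. }
  assert (Hd2b : forall x, 0 < x < L -> -1/4 <= d2 x <= B').
  { intros x Hx. unfold d2, B'. pose proof (Hphi x ltac:(lra)). pose proof (H01 x ltac:(lra)).
    assert (0 <= psi x * (b * phi x)) by (apply Rmult_le_pos; [lra|apply Rmult_le_pos; lra]).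
    assert (psi x * (b * phi x) <= b * Mphi).
    { assert (b * phi x <= b * Mphi) by (apply Rmult_le_compat_l; lra).
      assert (0 <= b * phi x) by (apply Rmult_le_pos; lra). nra. }
    replace (- (psi x * (1 - b * phi x - psi x))) with (psi x * (b * phi x) + (psi x * psi x - psi x)) by ring.
    assert (psi x * psi x - psi x >= -1/4) by (pose proof (pow2_ge_0 (psi x - 1/2)); nra).
    assert (psi x * psi x - psi x <= 0) by nra. lra. }
  assert (Hmid : forall x, dl <= x <= L - dl -> psi x <= A / 4).
  { apply (GL psi dpsi d2 dl (L - dl) (A/4)). lra. apply (ccont_sub psi 0 L); auto; lra.
    intros; apply Hd'; lra. intros; apply Hd'; lra. apply Hbar; auto. apply Hbar; auto.
    intros y Hy _. unfold d2. pose proof (Hm y ltac:(lra)). pose proof (H01 y ltac:(lra)).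
    assert (b * m <= b * phi y) by (apply Rmult_le_compat_l; lra).
    assert (0 <= k ^ 2) by (apply pow_le; lra). nra. }
  assert (HsmallA : A / 4 + dl ^ 2 / 8 < A).
  { assert (dl ^ 2 <= dl * (A / 4)) by (simpl; nra). unfold A in *; nra. }
  assert (Hlim : forall pd, pd <= A / 4 -> (pd - A) / dl + dl / 8 < - C).
  { intros pd Hpd.
    assert (Ht : 0 < / dl) by (apply Rinv_0_lt_compat; lra).
    assert (Hq : (4 * C + 4) <= A * / dl).
    { replace (4 * C + 4) with ((4 * C + 4) * dl * / dl) by (field; lra).
      apply Rmult_le_compat_r. lra.
      replace A with ((A / (4 * C + 4)) * (4 * C + 4)) by (field; lra).
      rewrite (Rmult_comm (A / (4 * C + 4))). apply Rmult_le_compat_l; lra. }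
    unfold Rdiv at 1. assert (dl <= 1) by (unfold A in *; lra). nra. }
  destruct (LE psi dpsi d2 dl A B' Hdl HB' (ccont_sub psi 0 L 0 dl ltac:(lra) ltac:(lra) Hc)
     ltac:(intros; apply Hd'; lra) ltac:(intros; apply Hd2b; lra) H0
     ltac:(pose proof (Hbar dl ltac:(auto)); lra)) as [Hleft [l [Hl1 Hl2]]].
  set (fr := fun x => psi (L - x)).
  set (dfr := fun x => - dpsi (L - x)).
  set (d2r := fun x => d2 (L - x)).
  assert (Hdr : forall x, 0 < x < dl -> is_derive fr x (dfr x) /\ is_derive dfr x (d2r x)).
  { intros x Hx. split.
    - apply der_refl. apply Hd'. lra.
    - unfold dfr, d2r. replace (d2 (L - x)) with (- - d2 (L - x)) by ring.
      apply (is_derive_opp (fun t => dpsi (L - t))). apply der_refl. apply Hd'; lra. }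
  destruct (LE fr dfr d2r dl A B' Hdl HB' (ccont_refl psi (L - dl) L L 0 dl (ccont_sub psi 0 L (L - dl) L ltac:(lra) ltac:(lra) Hc) ltac:(ring) ltac:(ring))
     Hdr ltac:(intros; unfold d2r; apply Hd2b; lra)
     ltac:(unfold fr; replace (L - 0) with L by ring; auto)
     ltac:(unfold fr; pose proof (Hbar (L - dl) ltac:(auto)); lra)) as [Hright [lr [Hr1 Hr2]]].
  split; [|split].
  - intros x Hx.
    destruct (Rle_lt_dec x dl). apply Hleft; lra.
    destruct (Rle_lt_dec (L - dl) x).
    + specialize (Hright (L - x) ltac:(lra)). unfold fr in Hright.
      replace (L - (L - x)) with x in Hright by ring. auto.
    + pose proof (Hmid x ltac:(lra)). unfold A in *; lra.
  - exists l. split. apply right_deriv_eps. auto.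
    pose proof (Hlim (psi dl) (Hbar dl ltac:(auto))). lra.
  - exists (- lr). split.
    + apply left_deriv_eps. intros e He. destruct (Hr1 e He) as [d [Hd0 Hd1]].
      exists d. split; auto. intros h Hh. specialize (Hd1 (- h) ltac:(lra)).
      unfold fr in Hd1. replace (L - (0 + - h)) with (L + h) in Hd1 by ring.
      replace (L - 0) with L in Hd1 by ring.
      replace ((psi (L + h) - psi L) / h - - lr) with (- ((psi (L + h) - psi L) / - h - lr))
        by (field; lra).
      rewrite Rabs_Ropp. auto.
    + pose proof (Hlim (fr dl) ltac:(unfold fr; apply Hbar; auto)). lra.
Qed.

Lemma cont_at_plus f g x : cont_at f x -> cont_at g x -> cont_at (fun t => f t + g t) x.
Proof.
  intros H1 H2. apply continuous_cont_at.
  apply (continuous_plus f g); apply cont_at_continuous; auto.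
Qed.
Lemma cont_at_mult f g x : cont_at f x -> cont_at g x -> cont_at (fun t => f t * g t) x.
Proof.
  intros H1 H2. apply continuous_cont_at.
  apply (continuous_mult f g); apply cont_at_continuous; auto.
Qed.
Lemma cont_at_opp f x : cont_at f x -> cont_at (fun t => - f t) x.
Proof.
  intros H1. apply continuous_cont_at.
  apply (continuous_opp f); apply cont_at_continuous; auto.
Qed.
Lemma cont_at_minus f g x : cont_at f x -> cont_at g x -> cont_at (fun t => f t - g t) x.
Proof. intros. apply cont_at_plus; auto. apply cont_at_opp; auto. Qed.
Lemma cont_at_const c x : cont_at (fun _ => c) x.
Proof. intros e He. exists 1. split. lra. intros. rlra. Qed.
Lemma cont_at_id x : cont_at (fun t => t) x.
Proof. intros e He. exists e. split. lra. intros. auto. Qed.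
Lemma cont_at_comp f g x : cont_at g x -> cont_at f (g x) -> cont_at (fun t => f (g t)) x.
Proof.
  intros Hg Hf e He. destruct (Hf e He) as [d1 [Hd1 H1]]. destruct (Hg d1 Hd1) as [d2 [Hd2 H2]].
  exists d2. split; auto.
Qed.
Lemma cont_clamp p q x : p <= q -> cont_at (clamp p q) x.
Proof.
  intros Hpq e He. exists e. split; auto. intros y Hy. eapply Rle_lt_trans. apply clamp_lip; auto. auto.
Qed.

Definition pt (L : R) (phi : R -> R) x := phi (clamp 0 L x).
Definition Fn L phi b t u := - clamp 0 1 u * (1 - b * pt L phi t - clamp 0 1 u).

Lemma pt_cont L phi x : 0 <= L -> ccont phi 0 L -> cont_at (pt L phi) x.
Proof. intros. unfold pt. apply ccont_clamp; auto. Qed.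

Lemma Fn_cont L phi b w x : 0 <= L -> ccont phi 0 L -> cont_at w x ->
  cont_at (fun t => Fn L phi b t (w t)) x.
Proof.
  intros HL Hc Hw. unfold Fn.
  assert (Hcw : cont_at (fun t => clamp 0 1 (w t)) x).
  { apply (cont_at_comp (clamp 0 1) w). auto. apply cont_clamp; lra. }
  apply cont_at_mult. apply cont_at_opp; auto.
  apply cont_at_minus; auto. apply cont_at_minus. apply cont_at_const.
  apply cont_at_mult. apply cont_at_const. apply pt_cont; auto.
Qed.

Lemma Fn_lip L phi b Mphi t u v : 0 <= b -> 0 <= pt L phi t <= Mphi ->
  Rabs (Fn L phi b t u - Fn L phi b t v) <= (3 + b * Mphi) * Rabs (u - v).
Proof.
  intros Hb Hp. unfold Fn.
  set (cu := clamp 0 1 u). set (cv := clamp 0 1 v).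
  assert (Hu : 0 <= cu <= 1) by (apply clamp_in; lra).
  assert (Hv : 0 <= cv <= 1) by (apply clamp_in; lra).
  assert (Hl : Rabs (cu - cv) <= Rabs (u - v)) by (apply clamp_lip; lra).
  set (P := pt L phi t) in *.
  replace (- cu * (1 - b * P - cu) - - cv * (1 - b * P - cv)) with
    ((cu - cv) * (- 1 + b * P + cu + cv)) by ring.
  rewrite Rabs_mult.
  assert (Rabs (- 1 + b * P + cu + cv) <= 3 + b * Mphi).
  { assert (0 <= b * P) by (apply Rmult_le_pos; lra).
    assert (b * P <= b * Mphi) by (apply Rmult_le_compat_l; lra). rlra. }
  assert (0 <= Rabs (cu - cv)) by apply Rabs_pos.
  assert (0 <= Rabs (- 1 + b * P + cu + cv)) by apply Rabs_pos.
  rewrite Rmult_comm. apply Rmult_le_compat; auto.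
Qed.

Lemma Fn_bound L phi b Mphi t u : 0 <= b -> 0 <= pt L phi t <= Mphi ->
  Rabs (Fn L phi b t u) <= 2 + b * Mphi.
Proof.
  intros Hb Hp. unfold Fn.
  set (cu := clamp 0 1 u).
  assert (Hu : 0 <= cu <= 1) by (apply clamp_in; lra).
  set (P := pt L phi t) in *.
  assert (0 <= b * P) by (apply Rmult_le_pos; lra).
  assert (b * P <= b * Mphi) by (apply Rmult_le_compat_l; lra).
  rewrite Rabs_mult. rewrite Rabs_Ropp.
  assert (Rabs (1 - b * P - cu) <= 2 + b * Mphi) by rlra.
  assert (Rabs cu <= 1) by rlra.
  assert (0 <= Rabs cu) by apply Rabs_pos.
  assert (0 <= Rabs (1 - b * P - cu)) by apply Rabs_pos.
  replace (2 + b * Mphi) with (1 * (2 + b * Mphi)) by ring.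
  apply Rmult_le_compat; auto.
Qed.

Definition gcont (h : R -> R) := forall x, cont_at h x.

Lemma gcont_ex_RInt h u v : gcont h -> ex_RInt h u v.
Proof. intros H. apply (ex_RInt_continuous (V := R_CompleteNormedModule)). intros z _. apply cont_at_continuous. auto. Qed.

Lemma cont_at_abs f x : cont_at f x -> cont_at (fun t => Rabs (f t)) x.
Proof.
  intros H e He. destruct (H e He) as [d [Hd H']]. exists d; split; auto.
  intros y Hy. specialize (H' y Hy). eapply Rle_lt_trans. apply Rabs_triang_inv2. auto.
Qed.

Definition Kint (h : R -> R) (X : R) : R := RInt (fun t => (X - t) * h t) 0 X.

Lemma gcont_kern h X : gcont h -> gcont (fun t => (X - t) * h t).
Proof. intros H x. apply cont_at_mult; auto. apply cont_at_minus. apply cont_at_const. apply cont_at_id. Qed.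
Lemma gcont_th h : gcont h -> gcont (fun t => t * h t).
Proof. intros H x. apply cont_at_mult; auto. apply cont_at_id. Qed.

Lemma Kint_split h X : gcont h ->
  Kint h X = X * RInt h 0 X - RInt (fun t => t * h t) 0 X.
Proof.
  intros H. unfold Kint.
  transitivity (RInt (fun t => minus (scal X (h t)) (t * h t)) 0 X).
  { apply RInt_ext. intros. unfold minus, plus, opp, scal, mult; simpl. unfold mult; simpl. ring. }
  rewrite (RInt_minus (V := R_CompleteNormedModule) (fun t => scal X (h t)) (fun t => t * h t)).
  rewrite (RInt_scal (V := R_CompleteNormedModule) h).
  unfold minus, plus, opp, scal, mult; simpl. unfold mult; simpl. ring.
  all: apply gcont_ex_RInt; intros x; unfold scal; simpl; unfold mult; simpl.
  all: try (apply cont_at_mult; [apply cont_at_const| apply H]).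
  all: try apply H. apply gcont_th; auto.
Qed.

Lemma RInt_der h X : gcont h -> is_derive (fun Y => RInt h 0 Y) X (h X).
Proof.
  intros H. apply (is_derive_RInt h (fun Y => RInt h 0 Y) 0 X).
  exists (mkposreal 1 Rlt_0_1). intros y _. apply (RInt_correct (V := R_CompleteNormedModule)). apply gcont_ex_RInt; auto.
  apply cont_at_continuous; auto.
Qed.

Lemma P_der a s h X : gcont h ->
  is_derive (fun Y => a + s * Y + Kint h Y) X (s + RInt h 0 X).
Proof.
  intros H.
  apply (is_derive_ext (fun Y => a + s * Y + (Y * RInt h 0 Y - RInt (fun t => t * h t) 0 Y))).
  { intros Y. rewrite Kint_split; auto. }
  assert (H1 : is_derive (fun Y => a + s * Y) X s) by (auto_derive; auto; ring).
  assert (H2 : is_derive (fun Y => Y * RInt h 0 Y) X (1 * RInt h 0 X + X * h X)).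
  { apply (is_derive_mult (fun Y => Y) (fun Y => RInt h 0 Y)).
    apply (is_derive_id (K := R_AbsRing)). apply RInt_der; auto. intros; apply Rmult_comm. }
  assert (H3 : is_derive (fun Y => RInt (fun t => t * h t) 0 Y) X (X * h X)).
  { apply (RInt_der (fun t => t * h t)). apply gcont_th; auto. }
  assert (H4 := is_derive_minus _ _ X _ _ H2 H3).
  assert (H5 := is_derive_plus _ _ X _ _ H1 H4).
  replace (s + RInt h 0 X) with (plus s (minus (1 * RInt h 0 X + X * h X) (X * h X))).
  exact H5. unfold minus, plus, opp; simpl. ring.
Qed.

Lemma P_cont a s h X : gcont h -> cont_at (fun Y => a + s * Y + Kint h Y) X.
Proof.
  intros H. apply continuous_cont_at. apply (ex_derive_continuous (K := R_AbsRing) (V := R_NormedModule)).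
  eexists. apply P_der; auto.
Qed.

Lemma RInt_exp c X : 0 < c -> RInt (fun t => exp (c * t)) 0 X = (exp (c * X) - 1) / c.
Proof.
  intros Hc. apply is_RInt_unique.
  replace ((exp (c * X) - 1) / c) with (minus (exp (c * X) / c) (exp (c * 0) / c)).
  apply (is_RInt_derive (fun t => exp (c * t) / c)).
  - intros x _. auto_derive; auto. field. lra.
  - intros x _. apply cont_at_continuous. apply (cont_at_comp exp (fun t => c * t)).
    apply cont_at_mult. apply cont_at_const. apply cont_at_id.
    apply continuous_cont_at. apply (ex_derive_continuous (K := R_AbsRing) (V := R_NormedModule)).
    auto_derive; auto.
  - unfold minus, plus, opp; simpl. rewrite Rmult_0_r, exp_0. field. lra.
Qed.

Lemma Kint_bound h X B : 0 <= X -> gcont h -> (forall t, 0 <= t <= X -> Rabs (h t) <= B) ->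
  Rabs (Kint h X) <= X * (X * B).
Proof.
  intros HX H Hb. unfold Kint.
  eapply Rle_trans. apply abs_RInt_le; auto. apply gcont_ex_RInt. apply gcont_kern; auto.
  replace (X * (X * B)) with (RInt (fun _ => X * B) 0 X).
  apply RInt_le; auto.
  apply gcont_ex_RInt. intros x. apply cont_at_abs. apply gcont_kern; auto.
  apply gcont_ex_RInt. intros x. apply cont_at_const.
  intros t Ht. rewrite Rabs_mult. specialize (Hb t ltac:(lra)).
  assert (Rabs (X - t) <= X) by rlra.
  apply Rmult_le_compat; auto; apply Rabs_pos.
  rewrite RInt_const. unfold scal; simpl; unfold mult; simpl. ring.
Qed.

Lemma Kint_diff h1 h2 X Lam E c : 0 <= X -> 0 < c -> 0 <= Lam -> gcont h1 -> gcont h2 ->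
  (forall t, 0 <= t <= X -> Rabs (h1 t - h2 t) <= Lam * (E * exp (c * t))) ->
  Rabs (Kint h1 X - Kint h2 X) <= X * Lam * E * ((exp (c * X) - 1) / c).
Proof.
  intros HX Hc HL H1 H2 Hb. unfold Kint.
  assert (E1 : RInt (fun t => (X - t) * h1 t) 0 X - RInt (fun t => (X - t) * h2 t) 0 X =
               RInt (fun t => (X - t) * (h1 t - h2 t)) 0 X).
  { transitivity (RInt (fun t => minus ((X - t) * h1 t) ((X - t) * h2 t)) 0 X).
    rewrite (RInt_minus (V := R_CompleteNormedModule) (fun t => (X - t) * h1 t) (fun t => (X - t) * h2 t)). reflexivity.
    apply gcont_ex_RInt; apply gcont_kern; auto.
    apply gcont_ex_RInt; apply gcont_kern; auto.
    apply RInt_ext. intros. unfold minus, plus, opp; simpl. ring. }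
  rewrite E1.
  assert (Hc12 : gcont (fun t => h1 t - h2 t)) by (intros x; apply cont_at_minus; auto).
  eapply Rle_trans. apply abs_RInt_le; auto. apply gcont_ex_RInt. apply gcont_kern; auto.
  assert (Hexp : gcont (fun t => exp (c * t))).
  { intros x. apply (cont_at_comp exp (fun t => c * t)).
    apply cont_at_mult. apply cont_at_const. apply cont_at_id.
    apply continuous_cont_at. apply (ex_derive_continuous (K := R_AbsRing) (V := R_NormedModule)).
    auto_derive; auto. }
  replace (X * Lam * E * ((exp (c * X) - 1) / c)) with
    (RInt (fun t => scal (X * Lam * E) (exp (c * t))) 0 X).
  apply RInt_le; auto.
  apply gcont_ex_RInt. intros x. apply cont_at_abs. apply gcont_kern; auto.
  apply gcont_ex_RInt. intros x; unfold scal; simpl; unfold mult; simpl.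
  apply cont_at_mult. apply cont_at_const. apply Hexp.
  intros t Ht. rewrite Rabs_mult. specialize (Hb t ltac:(lra)).
  assert (Rabs (X - t) <= X) by rlra.
  unfold scal; simpl; unfold mult; simpl.
  replace (X * Lam * E * exp (c * t)) with (X * (Lam * (E * exp (c * t)))) by ring.
  apply Rmult_le_compat; auto; apply Rabs_pos.
  rewrite (RInt_scal (V := R_CompleteNormedModule) (fun t => exp (c * t))); [|apply gcont_ex_RInt; auto].
  rewrite RInt_exp; auto.
Qed.

Definition hw L phi b (w : R -> R) := fun t => Fn L phi b t (w t).
Definition Top L phi b a s w x := a + s * clamp 0 L x + Kint (hw L phi b w) (clamp 0 L x).

Lemma pt_bound L phi Mphi t : 0 < L -> (forall x, 0 <= x <= L -> 0 <= phi x <= Mphi) ->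
  0 <= pt L phi t <= Mphi.
Proof. intros HL Hp. unfold pt. apply Hp. apply clamp_in. lra. Qed.

Lemma hw_cont L phi b w : 0 < L -> ccont phi 0 L -> gcont w -> gcont (hw L phi b w).
Proof. intros HL Hc Hw x. apply Fn_cont; auto. lra. Qed.

Lemma Top_cont L phi b a s w : 0 < L -> ccont phi 0 L -> gcont w -> gcont (Top L phi b a s w).
Proof.
  intros HL Hc Hw x. unfold Top.
  apply (cont_at_comp (fun Y => a + s * Y + Kint (hw L phi b w) Y) (clamp 0 L)).
  apply cont_clamp; lra. apply P_cont. apply hw_cont; auto.
Qed.

Lemma Top_bound L phi b a s w Mphi x : 0 < L -> ccont phi 0 L -> 0 <= b ->
  (forall x, 0 <= x <= L -> 0 <= phi x <= Mphi) -> gcont w ->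
  Rabs (Top L phi b a s w x - a - s * clamp 0 L x) <= L * (L * (2 + b * Mphi)).
Proof.
  intros HL Hc Hb Hp Hw. unfold Top.
  replace (a + s * clamp 0 L x + Kint (hw L phi b w) (clamp 0 L x) - a - s * clamp 0 L x)
    with (Kint (hw L phi b w) (clamp 0 L x)) by ring.
  pose proof (clamp_in 0 L x ltac:(lra)).
  eapply Rle_trans. apply Kint_bound. lra. apply hw_cont; auto.
  intros t _. unfold hw. apply Fn_bound; auto. apply pt_bound; auto.
  assert (0 <= 2 + b * Mphi).
  { pose proof (Hp 0 ltac:(lra)). assert (0 <= b * Mphi) by (apply Rmult_le_pos; lra). lra. }
  apply Rmult_le_compat; try lra. apply Rmult_le_pos; lra.
  apply Rmult_le_compat_r; lra.
Qed.

Lemma Top_diff L phi b a s1 s2 w1 w2 Mphi E x : 0 < L -> ccont phi 0 L -> 0 <= b ->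
  (forall x, 0 <= x <= L -> 0 <= phi x <= Mphi) -> gcont w1 -> gcont w2 ->
  (forall t, 0 <= t <= L -> Rabs (w1 t - w2 t) <= E * exp (2 * L * (3 + b * Mphi) * t)) ->
  Rabs (Top L phi b a s1 w1 x - Top L phi b a s2 w2 x) <=
    Rabs (s1 - s2) * L + E / 2 * exp (2 * L * (3 + b * Mphi) * clamp 0 L x).
Proof.
  intros HL Hc Hb Hp H1 H2 HE.
  set (Lam := 3 + b * Mphi) in *. set (c := 2 * L * Lam) in *.
  assert (HM : 0 <= Mphi) by (pose proof (Hp 0 ltac:(lra)); lra).
  assert (HLam : 0 < Lam) by (unfold Lam; assert (0 <= b * Mphi) by (apply Rmult_le_pos; lra); lra).
  assert (Hc0 : 0 < c) by (unfold c; apply Rmult_lt_0_compat; lra).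
  assert (HE0 : 0 <= E).
  { specialize (HE 0 ltac:(lra)). rewrite Rmult_0_r, exp_0 in HE. pose proof (Rabs_pos (w1 0 - w2 0)). lra. }
  set (X := clamp 0 L x).
  assert (HX : 0 <= X <= L) by (apply clamp_in; lra).
  unfold Top. fold X.
  replace (a + s1 * X + Kint (hw L phi b w1) X - (a + s2 * X + Kint (hw L phi b w2) X)) with
    ((s1 - s2) * X + (Kint (hw L phi b w1) X - Kint (hw L phi b w2) X)) by ring.
  eapply Rle_trans. apply Rabs_triang.
  assert (Hk := Kint_diff (hw L phi b w1) (hw L phi b w2) X Lam E c ltac:(lra) Hc0 ltac:(lra)
     (hw_cont L phi b w1 HL Hc H1) (hw_cont L phi b w2 HL Hc H2)).
  assert (Hk2 : Rabs (Kint (hw L phi b w1) X - Kint (hw L phi b w2) X) <= X * Lam * E * ((exp (c * X) - 1) / c)).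
  { apply Hk. intros t Ht. unfold hw. eapply Rle_trans. apply Fn_lip; auto. apply pt_bound; auto.
    apply Rmult_le_compat_l. lra. apply HE. lra. }
  assert (Hexp : 1 <= exp (c * X)).
  { rewrite <- exp_0. destruct (Req_dec X 0) as [->|]. rewrite Rmult_0_r. lra.
    left. apply exp_increasing. apply Rmult_lt_0_compat; lra. }
  assert (E2 : X * Lam * E * ((exp (c * X) - 1) / c) = (X / L) * (E / 2 * (exp (c * X) - 1))).
  { unfold c. field. lra. }
  assert (X / L <= 1).
  { unfold Rdiv. replace 1 with (L * / L) by (field; lra).
    apply Rmult_le_compat_r; [left; apply Rinv_0_lt_compat; lra | lra]. }
  assert (0 <= X / L).
  { unfold Rdiv. apply Rmult_le_pos. lra. left; apply Rinv_0_lt_compat; lra. }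
  assert (0 <= E / 2 * (exp (c * X) - 1)) by (apply Rmult_le_pos; lra).
  assert ((X / L) * (E / 2 * (exp (c * X) - 1)) <= E / 2 * (exp (c * X) - 1)) by nra.
  assert (Rabs ((s1 - s2) * X) <= Rabs (s1 - s2) * L).
  { rewrite Rabs_mult. apply Rmult_le_compat_l. apply Rabs_pos. rlra. }
  lra.
Qed.

Fixpoint pic L phi b a s (n : nat) : R -> R :=
  match n with
  | O => fun _ => a
  | S n => Top L phi b a s (pic L phi b a s n)
  end.

Lemma pic_cont L phi b a s n : 0 < L -> ccont phi 0 L -> gcont (pic L phi b a s n).
Proof.
  intros HL Hc. induction n; simpl.
  - intros x. apply cont_at_const.
  - apply Top_cont; auto.
Qed.

Definition Hyp L phi b Mphi := 0 < L /\ ccont phi 0 L /\ 0 <= b /\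
  (forall x, 0 <= x <= L -> 0 <= phi x <= Mphi).

Definition cK L b Mphi := 2 * L * (3 + b * Mphi).
Definition Dc L b Mphi s := Rabs s * L + L * (L * (2 + b * Mphi)).
Definition De L b Mphi s := Dc L b Mphi s * exp (cK L b Mphi * L).

Lemma small K g : 0 <= K -> 0 < g -> exists n, K * (/2) ^ n < g.
Proof.
  intros HK Hg. destruct (pow_lt_1_zero (/2) ltac:(rewrite Rabs_pos_eq; lra) (g / (K + 1))) as [N HN].
  apply Rdiv_lt_0_compat; lra.
  exists N. specialize (HN N (le_n _)). rewrite Rabs_pos_eq in HN by (apply pow_le; lra).
  assert (0 <= (/2) ^ N) by (apply pow_le; lra).
  assert ((K + 1) * (/ 2) ^ N < g).
  { replace g with ((K + 1) * (g / (K + 1))) by (field; lra). apply Rmult_lt_compat_l; lra. }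
  nra.
Qed.

Lemma Hyp_facts L phi b Mphi : Hyp L phi b Mphi ->
  0 <= Mphi /\ 0 < cK L b Mphi /\ 0 <= 2 + b * Mphi.
Proof.
  intros [HL [Hc [Hb Hp]]]. pose proof (Hp 0 ltac:(lra)).
  assert (0 <= b * Mphi) by (apply Rmult_le_pos; lra).
  unfold cK. split. lra. split. apply Rmult_lt_0_compat; lra. lra.
Qed.

Lemma exp_ge1 y : 0 <= y -> 1 <= exp y.
Proof.
  intros Hy. rewrite <- exp_0. destruct (Req_dec y 0) as [->|]. lra.
  left. apply exp_increasing. lra.
Qed.

Lemma exp_mono y z : y <= z -> exp y <= exp z.
Proof. intros H. destruct (Req_dec y z) as [->|]. lra. left. apply exp_increasing. lra. Qed.


Lemma pic_step L phi b Mphi a s n x : Hyp L phi b Mphi ->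
  Rabs (pic L phi b a s (S n) x - pic L phi b a s n x) <=
    Dc L b Mphi s * (/2) ^ n * exp (cK L b Mphi * clamp 0 L x).
Proof.
  intros HH. pose proof (Hyp_facts _ _ _ _ HH) as [HM [Hc0 HB]].
  destruct HH as [HL [Hc [Hb Hp]]].
  assert (HD : 0 <= Dc L b Mphi s).
  { unfold Dc. pose proof (Rabs_pos s). 
    assert (0 <= L * (L * (2 + b * Mphi))) by (repeat apply Rmult_le_pos; lra).
    assert (0 <= Rabs s * L) by (apply Rmult_le_pos; lra). lra. }
  revert x. induction n; intros x.
  - simpl pic. simpl pow.
    pose proof (Top_bound L phi b a s (fun _ => a) Mphi x HL Hc Hb Hp ltac:(intros y; apply cont_at_const)).
    pose proof (clamp_in 0 L x ltac:(lra)).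
    assert (Rabs (s * clamp 0 L x) <= Rabs s * L).
    { rewrite Rabs_mult. apply Rmult_le_compat_l. apply Rabs_pos. rlra. }
    assert (Rabs (Top L phi b a s (fun _ : R => a) x - a) <= Dc L b Mphi s).
    { unfold Dc. replace (Top L phi b a s (fun _ : R => a) x - a) with
        ((Top L phi b a s (fun _ : R => a) x - a - s * clamp 0 L x) + s * clamp 0 L x) by ring.
      eapply Rle_trans. apply Rabs_triang. lra. }
    pose proof (exp_ge1 (cK L b Mphi * clamp 0 L x) ltac:(apply Rmult_le_pos; lra)).
    rewrite Rmult_1_r. nra.
  - change (pic L phi b a s (S (S n))) with (Top L phi b a s (pic L phi b a s (S n))).
    change (pic L phi b a s (S n)) with (Top L phi b a s (pic L phi b a s n)) at 2.
    eapply Rle_trans. apply (Top_diff L phi b a s s _ _ Mphi (Dc L b Mphi s * (/ 2) ^ n)); auto.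
    apply pic_cont; auto. apply pic_cont; auto.
    intros t Ht. specialize (IHn t). rewrite clamp_id in IHn; auto. 
    replace (s - s) with 0 by ring. rewrite Rabs_R0. unfold cK. simpl pow. lra.
Qed.

Lemma De_pos L phi b Mphi s : Hyp L phi b Mphi -> 0 <= De L b Mphi s.
Proof.
  intros HH. pose proof (Hyp_facts _ _ _ _ HH) as [HM [Hc0 HB]].
  destruct HH as [HL [Hc [Hb Hp]]]. unfold De, Dc.
  apply Rmult_le_pos. pose proof (Rabs_pos s).
  assert (0 <= L * (L * (2 + b * Mphi))) by (repeat apply Rmult_le_pos; lra).
  assert (0 <= Rabs s * L) by (apply Rmult_le_pos; lra). lra. left; apply exp_pos.
Qed.

Lemma pic_unif L phi b Mphi a s n x : Hyp L phi b Mphi ->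
  Rabs (pic L phi b a s (S n) x - pic L phi b a s n x) <= De L b Mphi s * (/2) ^ n.
Proof.
  intros HH. eapply Rle_trans. apply (pic_step L phi b Mphi a s n x HH).
  pose proof (Hyp_facts _ _ _ _ HH) as [HM [Hc0 HB]].
  destruct HH as [HL [Hc [Hb Hp]]].
  assert (HD : 0 <= Dc L b Mphi s).
  { unfold Dc. pose proof (Rabs_pos s).
    assert (0 <= L * (L * (2 + b * Mphi))) by (repeat apply Rmult_le_pos; lra).
    assert (0 <= Rabs s * L) by (apply Rmult_le_pos; lra). lra. }
  pose proof (clamp_in 0 L x ltac:(lra)).
  assert (exp (cK L b Mphi * clamp 0 L x) <= exp (cK L b Mphi * L)).
  { apply exp_mono. apply Rmult_le_compat_l; lra. }
  unfold De. assert (0 <= (/2) ^ n) by (apply pow_le; lra).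
  replace (Dc L b Mphi s * exp (cK L b Mphi * L) * (/ 2) ^ n) with
    (Dc L b Mphi s * (/ 2) ^ n * exp (cK L b Mphi * L)) by ring.
  apply Rmult_le_compat_l; auto. apply Rmult_le_pos; auto.
Qed.

Lemma pic_tele L phi b Mphi a s x k n : Hyp L phi b Mphi ->
  Rabs (pic L phi b a s (n + k) x - pic L phi b a s n x) <=
    2 * De L b Mphi s * (/2) ^ n * (1 - (/2) ^ k).
Proof.
  intros HH. induction k.
  - rewrite Nat.add_0_r. replace (pic L phi b a s n x - pic L phi b a s n x) with 0 by ring.
    rewrite Rabs_R0. simpl. lra.
  - rewrite Nat.add_succ_r.
    replace (pic L phi b a s (S (n + k)) x - pic L phi b a s n x) with
      ((pic L phi b a s (S (n + k)) x - pic L phi b a s (n + k) x) + (pic L phi b a s (n + k) x - pic L phi b a s n x)) by ring.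
    eapply Rle_trans. apply Rabs_triang.
    pose proof (pic_unif L phi b Mphi a s (n + k) x HH).
    rewrite pow_add in H. simpl pow. lra.
Qed.

Lemma pic_cb L phi b Mphi a s x n m : Hyp L phi b Mphi -> (n <= m)%nat ->
  Rabs (pic L phi b a s m x - pic L phi b a s n x) <= 2 * De L b Mphi s * (/2) ^ n.
Proof.
  intros HH Hnm. replace m with (n + (m - n))%nat by lia.
  eapply Rle_trans. apply (pic_tele L phi b Mphi a s x (m - n) n HH).
  pose proof (De_pos L phi b Mphi s HH).
  assert (0 <= (/2) ^ n) by (apply pow_le; lra).
  assert (0 <= (/2) ^ (m - n)) by (apply pow_le; lra).
  assert (0 <= 2 * De L b Mphi s * (/ 2) ^ n) by (apply Rmult_le_pos; [apply Rmult_le_pos|]; lra).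
  nra.
Qed.

Definition Wl L phi b a s x := real (Lim_seq (fun n => pic L phi b a s n x)).

Lemma Wl_lim L phi b Mphi a s x : Hyp L phi b Mphi ->
  Un_cv (fun n => pic L phi b a s n x) (Wl L phi b a s x).
Proof.
  intros HH. apply is_lim_seq_Reals. unfold Wl. apply Lim_seq_correct'.
  apply ex_lim_seq_cauchy_corr. intros eps.
  pose proof (De_pos L phi b Mphi s HH).
  destruct (small (4 * De L b Mphi s) eps ltac:(lra) (cond_pos eps)) as [N HN].
  exists N. intros n m Hn Hm.
  pose proof (pic_cb L phi b Mphi a s x N n HH Hn).
  pose proof (pic_cb L phi b Mphi a s x N m HH Hm).
  replace (pic L phi b a s n x - pic L phi b a s m x) with
    ((pic L phi b a s n x - pic L phi b a s N x) - (pic L phi b a s m x - pic L phi b a s N x)) by ring.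
  eapply Rle_lt_trans. apply Rabs_triang. rewrite Rabs_Ropp. lra.
Qed.

Lemma Wl_close L phi b Mphi a s x n : Hyp L phi b Mphi ->
  Rabs (Wl L phi b a s x - pic L phi b a s n x) <= 2 * De L b Mphi s * (/2) ^ n.
Proof.
  intros HH. apply Rnot_lt_le. intros Hlt.
  set (g := Rabs (Wl L phi b a s x - pic L phi b a s n x) - 2 * De L b Mphi s * (/2) ^ n).
  destruct (Wl_lim L phi b Mphi a s x HH g ltac:(unfold g; lra)) as [N HN].
  specialize (HN (max N n) (Nat.le_max_l _ _)). unfold Rdist in HN.
  pose proof (pic_cb L phi b Mphi a s x n (max N n) HH (Nat.le_max_r _ _)).
  assert (Rabs (Wl L phi b a s x - pic L phi b a s n x) <=
     Rabs (pic L phi b a s (max N n) x - Wl L phi b a s x) + Rabs (pic L phi b a s (max N n) x - pic L phi b a s n x)).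
  { replace (Wl L phi b a s x - pic L phi b a s n x) with
      (- (pic L phi b a s (max N n) x - Wl L phi b a s x) + (pic L phi b a s (max N n) x - pic L phi b a s n x)) by ring.
    eapply Rle_trans. apply Rabs_triang. rewrite Rabs_Ropp. lra. }
  unfold g in HN. lra.
Qed.

Lemma Wl_cont L phi b Mphi a s : Hyp L phi b Mphi -> gcont (Wl L phi b a s).
Proof.
  intros HH x e He.
  pose proof (De_pos L phi b Mphi s HH).
  destruct (small (2 * De L b Mphi s) (e / 3) ltac:(lra) ltac:(lra)) as [n Hn].
  destruct HH as [HL [Hc [Hb Hp]]] eqn:E.
  destruct (pic_cont L phi b a s n HL Hc x (e / 3) ltac:(lra)) as [d [Hd H']].
  exists d. split; auto. intros y Hy. specialize (H' y Hy).
  pose proof (Wl_close L phi b Mphi a s x n HH).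
  pose proof (Wl_close L phi b Mphi a s y n HH).
  replace (Wl L phi b a s y - Wl L phi b a s x) with
    ((Wl L phi b a s y - pic L phi b a s n y) + (pic L phi b a s n y - pic L phi b a s n x)
     - (Wl L phi b a s x - pic L phi b a s n x)) by ring.
  eapply Rle_lt_trans. apply Rabs_triang. rewrite Rabs_Ropp.
  eapply Rle_lt_trans. apply Rplus_le_compat_r. apply Rabs_triang. lra.
Qed.

Lemma Wl_fix L phi b Mphi a s x : Hyp L phi b Mphi ->
  Wl L phi b a s x = Top L phi b a s (Wl L phi b a s) x.
Proof.
  intros HH. pose proof (Hyp_facts _ _ _ _ HH) as [HM [Hc0 HB]].
  pose proof (De_pos L phi b Mphi s HH).
  pose proof (Wl_cont L phi b Mphi a s HH) as HW.
  destruct HH as [HL [Hc [Hb Hp]]] eqn:E.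
  apply Rminus_diag_uniq. apply Rabs_eq_0. apply Rle_antisym; [|apply Rabs_pos].
  apply Rnot_lt_le. intros Hlt.
  set (g := Rabs (Wl L phi b a s x - Top L phi b a s (Wl L phi b a s) x)) in *.
  destruct (small (2 * De L b Mphi s + De L b Mphi s * exp (cK L b Mphi * L)) g) as [n Hn]; auto.
  { assert (0 <= De L b Mphi s * exp (cK L b Mphi * L)) by (apply Rmult_le_pos; [lra| left; apply exp_pos]). lra. }
  pose proof (Wl_close L phi b Mphi a s x (S n) HH) as H1.
  assert (H2 : Rabs (Top L phi b a s (Wl L phi b a s) x - pic L phi b a s (S n) x) <=
     Rabs (s - s) * L + (2 * De L b Mphi s * (/ 2) ^ n) / 2 * exp (cK L b Mphi * clamp 0 L x)).
  { simpl pic. apply Top_diff; auto. apply pic_cont; auto.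
    intros t Ht. eapply Rle_trans. apply (Wl_close L phi b Mphi a s t n HH).
    assert (0 <= 2 * De L b Mphi s * (/ 2) ^ n) by (apply Rmult_le_pos; [apply Rmult_le_pos|apply pow_le]; lra).
    pose proof (exp_ge1 (2 * L * (3 + b * Mphi) * t)). 
    assert (0 <= 2 * L * (3 + b * Mphi) * t) by (unfold cK in Hc0; apply Rmult_le_pos; lra). nra. }
  replace (s - s) with 0 in H2 by ring. rewrite Rabs_R0 in H2.
  pose proof (clamp_in 0 L x ltac:(lra)).
  assert (exp (cK L b Mphi * clamp 0 L x) <= exp (cK L b Mphi * L)).
  { apply exp_mono. apply Rmult_le_compat_l; lra. }
  assert (0 <= (/ 2) ^ n) by (apply pow_le; lra).
  assert (g <= 2 * De L b Mphi s * (/ 2) ^ S n + De L b Mphi s * (/ 2) ^ n * exp (cK L b Mphi * L)).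
  { unfold g. replace (Wl L phi b a s x - Top L phi b a s (Wl L phi b a s) x) with
      ((Wl L phi b a s x - pic L phi b a s (S n) x) - (Top L phi b a s (Wl L phi b a s) x - pic L phi b a s (S n) x)) by ring.
    eapply Rle_trans. apply Rabs_triang. rewrite Rabs_Ropp.
    assert ((2 * De L b Mphi s * (/ 2) ^ n) / 2 * exp (cK L b Mphi * clamp 0 L x) <=
             De L b Mphi s * (/ 2) ^ n * exp (cK L b Mphi * L)).
    { replace ((2 * De L b Mphi s * (/ 2) ^ n) / 2) with (De L b Mphi s * (/ 2) ^ n) by field.
      apply Rmult_le_compat_l; auto. apply Rmult_le_pos; auto. }
    lra. }
  simpl pow in H5.
  assert (0 <= De L b Mphi s * (/ 2) ^ n) by (apply Rmult_le_pos; lra).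
  replace (2 * De L b Mphi s * (/ 2 * (/ 2) ^ n)) with (De L b Mphi s * (/ 2) ^ n) in H5 by field.
  replace ((2 * De L b Mphi s + De L b Mphi s * exp (cK L b Mphi * L)) * (/ 2) ^ n) with
    (2 * (De L b Mphi s * (/ 2) ^ n) + De L b Mphi s * (/ 2) ^ n * exp (cK L b Mphi * L)) in Hn by ring.
  lra.
Qed.

Lemma W_bound L phi b Mphi a s x : Hyp L phi b Mphi ->
  Rabs (Wl L phi b a s x) <= Rabs a + Rabs s * L + L * (L * (2 + b * Mphi)).
Proof.
  intros HH. rewrite Wl_fix with (Mphi := Mphi); auto.
  pose proof (Wl_cont L phi b Mphi a s HH) as HW.
  destruct HH as [HL [Hc [Hb Hp]]] eqn:E.
  pose proof (Top_bound L phi b a s (Wl L phi b a s) Mphi x HL Hc Hb Hp HW).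
  pose proof (clamp_in 0 L x ltac:(lra)).
  assert (Rabs (s * clamp 0 L x) <= Rabs s * L).
  { rewrite Rabs_mult. apply Rmult_le_compat_l. apply Rabs_pos. rlra. }
  replace (Top L phi b a s (Wl L phi b a s) x) with
    (a + s * clamp 0 L x + (Top L phi b a s (Wl L phi b a s) x - a - s * clamp 0 L x)) by ring.
  eapply Rle_trans. apply Rabs_triang. eapply Rle_trans. apply Rplus_le_compat_r. apply Rabs_triang. lra.
Qed.

Lemma W_lip L phi b Mphi a s1 s2 x : Hyp L phi b Mphi ->
  Rabs (Wl L phi b a s1 x - Wl L phi b a s2 x) <= 2 * Rabs (s1 - s2) * L * exp (cK L b Mphi * L).
Proof.
  intros HH. pose proof (Hyp_facts _ _ _ _ HH) as [HM [Hc0 HB]].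
  pose proof (Wl_cont L phi b Mphi a s1 HH) as HW1.
  pose proof (Wl_cont L phi b Mphi a s2 HH) as HW2.
  set (Bd := (Rabs a + Rabs s1 * L + L * (L * (2 + b * Mphi))) + (Rabs a + Rabs s2 * L + L * (L * (2 + b * Mphi)))).
  destruct HH as [HL [Hc [Hb Hp]]] eqn:E.
  assert (HBd : forall y, Rabs (Wl L phi b a s1 y - Wl L phi b a s2 y) <= Bd).
  { intros y. unfold Bd. pose proof (W_bound L phi b Mphi a s1 y HH). pose proof (W_bound L phi b Mphi a s2 y HH).
    eapply Rle_trans. apply Rabs_triang. rewrite Rabs_Ropp. lra. }
  assert (HBd0 : 0 <= Bd) by (specialize (HBd 0); pose proof (Rabs_pos (Wl L phi b a s1 0 - Wl L phi b a s2 0)); lra).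
  set (A0 := Rabs (s1 - s2) * L).
  assert (HA0 : 0 <= A0) by (unfold A0; apply Rmult_le_pos; [apply Rabs_pos|lra]).
  assert (Hind : forall n y, Rabs (Wl L phi b a s1 y - Wl L phi b a s2 y) <=
              (2 * A0 + Bd * (/2) ^ n) * exp (cK L b Mphi * clamp 0 L y)).
  { induction n; intros y.
    - simpl pow. pose proof (clamp_in 0 L y ltac:(lra)).
      pose proof (exp_ge1 (cK L b Mphi * clamp 0 L y) ltac:(apply Rmult_le_pos; lra)).
      specialize (HBd y). nra.
    - rewrite (Wl_fix L phi b Mphi a s1 y HH). rewrite (Wl_fix L phi b Mphi a s2 y HH).
      eapply Rle_trans. apply (Top_diff L phi b a s1 s2 _ _ Mphi (2 * A0 + Bd * (/ 2) ^ n)); auto.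
      intros t Ht. specialize (IHn t). rewrite clamp_id in IHn; auto.
      pose proof (clamp_in 0 L y ltac:(lra)).
      pose proof (exp_ge1 (cK L b Mphi * clamp 0 L y) ltac:(apply Rmult_le_pos; lra)).
      fold A0. unfold cK. simpl pow.
      set (ex := exp (2 * L * (3 + b * Mphi) * clamp 0 L y)) in *.
      unfold cK in H0. fold ex in H0.
      assert (A0 <= A0 * ex) by nra. nra. }
  apply Rnot_lt_le. intros Hlt.
  set (g := Rabs (Wl L phi b a s1 x - Wl L phi b a s2 x) - 2 * Rabs (s1 - s2) * L * exp (cK L b Mphi * L)).
  destruct (small (Bd * exp (cK L b Mphi * L)) g) as [n Hn].
  { apply Rmult_le_pos; auto. left; apply exp_pos. }
  { unfold g; lra. }
  specialize (Hind n x).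
  pose proof (clamp_in 0 L x ltac:(lra)).
  assert (exp (cK L b Mphi * clamp 0 L x) <= exp (cK L b Mphi * L)).
  { apply exp_mono. apply Rmult_le_compat_l; lra. }
  assert (0 <= (/ 2) ^ n) by (apply pow_le; lra).
  assert (0 <= 2 * A0 + Bd * (/ 2) ^ n) by nra.
  assert ((2 * A0 + Bd * (/ 2) ^ n) * exp (cK L b Mphi * clamp 0 L x) <=
          (2 * A0 + Bd * (/ 2) ^ n) * exp (cK L b Mphi * L)) by (apply Rmult_le_compat_l; auto).
  unfold g, A0 in *. nra.
Qed.

Lemma shoot L phi b Mphi a : Hyp L phi b Mphi ->
  exists s, Wl L phi b a s L = a.
Proof.
  intros HH. pose proof (Hyp_facts _ _ _ _ HH) as [HM [Hc0 HB]].
  set (g := fun s => Wl L phi b a s L - a).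
  set (K := 2 * L * exp (cK L b Mphi * L)).
  destruct HH as [HL [Hc [Hb Hp]]] eqn:E.
  assert (HK : 0 < K) by (unfold K; pose proof (exp_pos (cK L b Mphi * L)); apply Rmult_lt_0_compat; lra).
  assert (Hgc : continuity g).
  { intros s0. apply cont_at_pt. intros e He. exists (e / K). split. apply Rdiv_lt_0_compat; lra.
    intros y Hy. unfold g. replace (Wl L phi b a y L - a - (Wl L phi b a s0 L - a)) with
      (Wl L phi b a y L - Wl L phi b a s0 L) by ring.
    eapply Rle_lt_trans. apply (W_lip L phi b Mphi a y s0 L HH).
    replace (2 * Rabs (y - s0) * L * exp (cK L b Mphi * L)) with (Rabs (y - s0) * K) by (unfold K; ring).
    replace e with ((e / K) * K) by (field; lra). apply Rmult_lt_compat_r; auto. }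
  set (Bf := 2 + b * Mphi).
  assert (Hval : forall s, Rabs (Wl L phi b a s L - a - s * L) <= L * (L * Bf)).
  { intros s. rewrite (Wl_fix L phi b Mphi a s L HH).
    pose proof (Top_bound L phi b a s (Wl L phi b a s) Mphi L HL Hc Hb Hp (Wl_cont L phi b Mphi a s HH)).
    rewrite (clamp_id 0 L L) in H by lra. exact H. }
  assert (HLB : 0 <= L * Bf) by (apply Rmult_le_pos; unfold Bf; lra).
  destruct (IVT g (- (L * Bf + 1)) (L * Bf + 1) Hgc ltac:(lra)) as [z [_ Hz]].
  { unfold g. specialize (Hval (- (L * Bf + 1))). rlra. }
  { unfold g. specialize (Hval (L * Bf + 1)). rlra. }
  exists z. unfold g in Hz. lra.
Qed.

Definition dW L phi b a s x := s + RInt (hw L phi b (Wl L phi b a s)) 0 x.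

Lemma W_der L phi b Mphi a s x : Hyp L phi b Mphi -> 0 < x < L ->
  is_derive (Wl L phi b a s) x (dW L phi b a s x) /\
  is_derive (dW L phi b a s) x (hw L phi b (Wl L phi b a s) x).
Proof.
  intros HH Hx.
  pose proof (Wl_cont L phi b Mphi a s HH) as HW.
  destruct HH as [HL [Hc [Hb Hp]]] eqn:E.
  assert (Hh : gcont (hw L phi b (Wl L phi b a s))) by (apply hw_cont; auto).
  split.
  - apply (is_derive_ext_loc (fun Y => a + s * Y + Kint (hw L phi b (Wl L phi b a s)) Y)).
    + exists (mkposreal (Rmin x (L - x)) ltac:(apply Rmin_pos; lra)).
      intros y Hy. pose proof (proj1 (ball_R x (Rmin x (L - x)) y) Hy) as Hy'.
      pose proof (Rmin_l x (L - x)). pose proof (Rmin_r x (L - x)).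
      rewrite (Wl_fix L phi b Mphi a s y HH). unfold Top. rewrite clamp_id. reflexivity. rlra.
    + unfold dW. apply P_der; auto.
  - unfold dW. replace (hw L phi b (Wl L phi b a s) x) with (plus 0 (hw L phi b (Wl L phi b a s) x))
      by (unfold plus; simpl; ring).
    apply (is_derive_plus (fun _ => s) (fun Y => RInt (hw L phi b (Wl L phi b a s)) 0 Y)).
    apply (is_derive_const (K := R_AbsRing) (V := R_NormedModule)). apply RInt_der; auto.
Qed.

Lemma W_at0 L phi b Mphi a s : Hyp L phi b Mphi -> Wl L phi b a s 0 = a.
Proof.
  intros HH. rewrite (Wl_fix L phi b Mphi a s 0 HH). destruct HH as [HL _].
  unfold Top. rewrite clamp_id by lra. unfold Kint. rewrite RInt_point. unfold zero; simpl. ring.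
Qed.

Lemma clamp_hi u : 1 < u -> clamp 0 1 u = 1.
Proof. intros. unfold clamp, Rmax, Rmin. repeat destruct Rle_dec; lra. Qed.
Lemma clamp_lo u : u < 0 -> clamp 0 1 u = 0.
Proof. intros. unfold clamp, Rmax, Rmin. repeat destruct Rle_dec; lra. Qed.

Lemma exist_sol L phi b Mphi eps : Hyp L phi b Mphi -> 0 < eps < 1 ->
  exists psi, is_solution01 L b eps phi psi.
Proof.
  intros HH Heps.
  destruct (shoot L phi b Mphi (1 - eps) HH) as [z Hz].
  pose proof (Wl_cont L phi b Mphi (1 - eps) z HH) as HW.
  pose proof (W_at0 L phi b Mphi (1 - eps) z HH) as H0.
  pose proof (W_der L phi b Mphi (1 - eps) z) as Hder.
  set (W := Wl L phi b (1 - eps) z) in *.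
  set (dw := dW L phi b (1 - eps) z) in *.
  set (h := hw L phi b W) in *.
  destruct HH as [HL [Hc [Hb Hp]]] eqn:E.
  assert (Hup : forall x, 0 <= x <= L -> W x <= 1).
  { apply (GL W dw h 0 L 1); auto.
    - apply cont_ccont. auto.
    - intros x Hx. apply Hder; auto; exact HH.
    - intros x Hx. apply Hder; auto; exact HH.
    - lra.
    - lra.
    - intros y Hy Hgt. unfold h, hw, Fn. rewrite clamp_hi by auto.
      pose proof (pt_bound L phi Mphi y HL Hp).
      assert (0 <= b * pt L phi y) by (apply Rmult_le_pos; lra). lra. }
  assert (Hlo : forall x, 0 <= x <= L -> - W x <= 0).
  { apply (GL (fun t => - W t) (fun t => - dw t) (fun t => - h t) 0 L 0); auto.
    - apply cont_ccont. intros x. apply cont_at_opp. auto.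
    - intros x Hx. apply (is_derive_opp W). apply Hder; auto; exact HH.
    - intros x Hx. apply (is_derive_opp dw). apply Hder; auto; exact HH.
    - lra.
    - lra.
    - intros y Hy Hgt. unfold h, hw, Fn. rewrite clamp_lo by lra. lra. }
  exists W. split; [split; [|split; [|split]]|].
  - unfold cont_on_closed. apply ccont_cont_on_closed. apply cont_ccont. auto.
  - exists dw. intros x Hx. destruct (Hder x HH Hx) as [D1 D2]. split; auto.
    replace (- (W x * (1 - b * phi x - W x))) with (h x); auto.
    unfold h, hw, Fn, pt. 
    rewrite (clamp_id 0 1 (W x)) by (pose proof (Hup x ltac:(lra)); pose proof (Hlo x ltac:(lra)); lra).
    rewrite (clamp_id 0 L x) by lra. ring.
  - auto.
  - auto.
  - intros x Hx. pose proof (Hup x Hx). pose proof (Hlo x Hx). lra.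
Qed.

Theorem lemma3 (L eps C : R) (phi : R -> R)
  (hL : PI < L) (heps : 0 < eps < 1) (hC : 0 < C)
  (hphic : cont_on_closed phi 0 L) (hphi0 : phi 0 = 0) (hphiL : phi L = 0)
  (hphipos : forall x, 0 < x < L -> 0 < phi x) :
  exists bbar : R, 1 < bbar /\
    (exists psi, is_solution01 L bbar eps phi psi) /\
    (forall psi : R -> R, is_solution01 L bbar eps phi psi ->
       (forall x, 0 < x < L -> psi x < 1 - eps) /\
       (exists d0, is_right_deriv psi 0 d0 /\ d0 < - C) /\
       (exists dL, is_left_deriv psi L dL /\ C < dL)).
Proof.
  assert (HL0 : 0 < L) by (pose proof PI_RGT_0; lra).
  assert (Hc : ccont phi 0 L) by (apply cont_on_closed_ccont; exact hphic).
  assert (Hnn : forall x, 0 <= x <= L -> 0 <= phi x).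
  { intros x Hx. destruct (Req_dec x 0) as [->|H0]. lra.
    destruct (Req_dec x L) as [->|H1]. lra.
    left. apply hphipos. split. destruct Hx as [[Hx|Hx] _]; [lra| congruence].
    destruct Hx as [_ [Hx|Hx]]; [lra|congruence]. }
  destruct (continuity_ab_maj (fun y => phi (clamp 0 L y)) 0 L ltac:(lra)) as [Mx [HMx HMx1]].
  { intros c _. apply cont_at_pt. apply ccont_clamp; auto; lra. }
  set (Mphi := phi Mx).
  assert (Hphi : forall x, 0 <= x <= L -> 0 <= phi x <= Mphi).
  { intros x Hx. split. auto. specialize (HMx x Hx). simpl in HMx.
    rewrite !clamp_id in HMx by lra. auto. }
  set (A := 1 - eps).
  assert (HA : 0 < A < 1) by (unfold A; lra).
  set (dl := Rmin (L / 4) (A / (4 * C + 4))).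
  assert (Hdl : 0 < dl).
  { unfold dl. apply Rmin_pos. lra. apply Rdiv_lt_0_compat; lra. }
  assert (Hdl1 : 4 * dl <= L) by (unfold dl; pose proof (Rmin_l (L / 4) (A / (4 * C + 4))); lra).
  assert (Hdl2 : dl <= A / (4 * C + 4)) by (unfold dl; apply Rmin_r).
  set (k := 8 / ((1 - eps) / 2 * dl)).
  destruct (continuity_ab_min (fun y => phi (clamp 0 L y)) (dl / 2) (L - dl / 2) ltac:(lra)) as [mx [Hmx Hmx1]].
  { intros c _. apply cont_at_pt. apply ccont_clamp; auto; lra. }
  set (m := phi mx).
  assert (Hm : forall x, dl / 2 <= x <= L - dl / 2 -> m <= phi x).
  { intros x Hx. specialize (Hmx x Hx). simpl in Hmx. rewrite !clamp_id in Hmx by lra. auto. }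
  assert (Hm0 : 0 < m) by (apply hphipos; lra).
  set (bbar := Rmax 2 ((k ^ 2 + 1) / m)).
  assert (Hb1 : 2 <= bbar) by apply Rmax_l.
  assert (Hb2 : (k ^ 2 + 1) / m <= bbar) by apply Rmax_r.
  assert (Hkm : k ^ 2 <= bbar * m - 1).
  { assert ((k ^ 2 + 1) <= bbar * m); [|lra].
    replace (k ^ 2 + 1) with ((k ^ 2 + 1) / m * m) by (field; lra).
    apply Rmult_le_compat_r; lra. }
  exists bbar. split. lra. split.
  - apply (exist_sol L phi bbar Mphi eps); auto.
    unfold Hyp. repeat split; auto; try lra. apply Hphi; auto.
  - intros psi Hpsi.
    apply (all_sol L eps C phi bbar m Mphi dl k psi); auto; lra.
Qed.
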